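(* Let $A\in\mathbb{R}^{n\times n}$, let $\lambda\in\mathbb{R}$, and let $v\in\mathbb{R}^{n\times1}$ and $u\in\mathbb{R}^{1\times n}$ satisfy $Av=\lambda v$, $uA=\lambda u$ and $uv=1$. Then for every row vector $u'\in\mathbb{R}^{1\times n}$ with $u'v=1$, the matrix $\lambda vu'+(I-vu')A$ is conjugate (similar) to $A$, and for every integer $k\ge 0$, \[\bigl(\lambda vu'+(I-vu')A\bigr)^k=\lambda^k vu'+(I-vu')A^k,\] where $I$ is the $n\times n$ identity matrix. *)

(* Defs.v *)
From HB Require Import structures.
From mathcomp Require Import all_boot all_order all_algebra.
Set Implicit Arguments. Unset Strict Implicit. Unset Printing Implicit Defensive.
Import GRing.Theory Num.Theory.
Local Open Scope ring_scope.

Definition mx_conjugate (R : comUnitRingType) (n : nat) (A B : 'M[R]_n) : Prop :=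
  exists2 P : 'M[R]_n, P \in unitmx & B = invmx P *m A *m P.

(* Main.v *)
Require Import Defs.
From HB Require Import structures.
From mathcomp Require Import all_boot all_order all_algebra.
Import GRing.Theory Num.Theory.
Local Open Scope ring_scope.

Lemma zm (V : zmodType) (a A y c : V) : a + (A - (y - c + a)) = A - y + c.
Proof. by rewrite !opprD opprK addrC -!addrA; congr (_ + (_ + _)); rewrite addNr addr0. Qed.

Theorem lemma4p3 (R : realFieldType) (n : nat) (A : 'M[R]_n) (lambda : R)
  (v : 'cV[R]_n) (u : 'rV[R]_n)
  (hv : A *m v = lambda *: v) (hu : u *m A = lambda *: u)
  (huv : u *m v = 1%:M) :
  forall u' : 'rV[R]_n, u' *m v = 1%:M ->
    mx_conjugate A (lambda *: (v *m u') + (1%:M - v *m u') *m A) /\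
    (forall k : nat,
       (lambda *: (v *m u') + (1%:M - v *m u') *m A) ^+ k
       = lambda ^+ k *: (v *m u') + (1%:M - v *m u') *m (A ^+ k)).
Proof.
move=> u' hu'v.
have hAk : forall k, A ^+ k *m v = lambda ^+ k *: v.
  elim=> [|k IH]; first by rewrite expr0 scale1r; exact: mul1mx.
  by rewrite exprS -mulmxE -mulmxA IH -scalemxAr hv scalerA -exprSr.
have hIv : (1%:M - v *m u') *m v = 0.
  by rewrite mulmxBl mul1mx -mulmxA hu'v mulmx1 subrr.
have hvI : v *m u' *m (1%:M - v *m u') = 0.
  by rewrite mulmxBr mulmx1 mulmxA -(mulmxA v) hu'v mulmx1 subrr.
split.
  move: hu huv; have [w ->] : exists w, u = u' - w.
    by exists (u' - u); rewrite opprB addrC subrK.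
  move=> hu huv.
  have hwv : w *m v = 0.
    by move: huv; rewrite mulmxBl hu'v => /eqP; rewrite subr_eq addrC -subr_eq subrr eq_sym => /eqP.
  have hvw2 : v *m w *m (v *m w) = 0 by rewrite mulmxA -(mulmxA v) hwv mulmx0 mul0mx.
  have hPQ : (1%:M + v *m w) *m (1%:M - v *m w) = 1%:M.
    by rewrite mulmxDl mulmxBr !mul1mx mulmxBr mulmx1 hvw2 subr0 subrK.
  have hQP : (1%:M - v *m w) *m (1%:M + v *m w) = 1%:M.
    by rewrite mulmxBl mul1mx mulmxDr mulmx1 hvw2 addr0 addrK.
  have hunit : (1%:M + v *m w) \in unitmx.
    exact: (mulmx1_unit hPQ).1.
  exists (1%:M + v *m w) => //.
  have -> : invmx (1%:M + v *m w) = 1%:M - v *m w.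
    by have := mulKmx hunit (1%:M - v *m w); rewrite hPQ mulmx1.
  have key : v *m u' *m A - lambda *: (v *m u') = v *m w *m A - lambda *: (v *m w).
    have h := congr1 (mulmx v) hu.
    rewrite mulmxA mulmxBr mulmxBl -scalemxAr mulmxBr scalerBr in h.
    rewrite -[v *m u' *m A](subrK (v *m w *m A)) h.
    by rewrite addrAC (addrAC (lambda *: (v *m u'))) subrr add0r addrC.
  have key' : v *m u' *m A = v *m w *m A - lambda *: (v *m w) + lambda *: (v *m u').
    by rewrite -key subrK.
  rewrite -mulmxA mulmxDr mulmx1 mulmxA hv -scalemxAl mulmxBl mul1mx mulmxBl mul1mx.
  rewrite mulmxDr -scalemxAr hvw2 scaler0 addr0 key'.
  by rewrite zm addrAC.
elim=> [|k IH].
  rewrite !expr0 scale1r. have h1 : (1 : 'M[R]_n) = 1%:M by [].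
  by rewrite h1 mulmx1 addrC subrK.
rewrite exprSr IH -mulmxE [A ^+ k.+1]exprSr -mulmxE (mulmxDl (lambda ^+ k *: _)) !mulmxDr.
have T1 : lambda ^+ k *: (v *m u') *m (lambda *: (v *m u')) = lambda ^+ k.+1 *: (v *m u').
  by rewrite -scalemxAl -scalemxAr scalerA -exprSr mulmxA -(mulmxA v) hu'v mulmx1.
have T2 : lambda ^+ k *: (v *m u') *m ((1%:M - v *m u') *m A) = 0.
  by rewrite -scalemxAl mulmxA hvI mul0mx scaler0.
have T3 : (1%:M - v *m u') *m A ^+ k *m (lambda *: (v *m u')) = 0.
  by rewrite -scalemxAr mulmxA -(mulmxA _ _ v) hAk -scalemxAr hIv scaler0 mul0mx scaler0.
have T4 : (1%:M - v *m u') *m A ^+ k *m ((1%:M - v *m u') *m A) = (1%:M - v *m u') *m (A ^+ k *m A).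
  have E : A ^+ k *m (1%:M - v *m u') = A ^+ k - lambda ^+ k *: (v *m u').
    by rewrite mulmxBr mulmx1 mulmxA hAk scalemxAl.
  rewrite -mulmxA (mulmxA (A ^+ k)) E !mulmxBl !mul1mx !mulmxBr -!scalemxAl -!scalemxAr !mulmxA -(mulmxA v u' v) hu'v mulmx1.
  by rewrite opprB addrA subrK.
by rewrite T1 T2 T3 T4 addr0 add0r.
Qed.
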